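(* For every $n>1$, the logics $\mathrm{Log}_{=1}(\mathbb{R})$ and $\mathrm{Log}_{=1}(\mathbb{R}^n)$ are incomparable under inclusion (neither contains the other).
   Context: Modal formulas are built from a countable set of propositional variables using $\bot$, $\to$ and one unary modality $\lozenge$. A frame is a pair $(X,R)$; a valuation assigns subsets of $X$ to variables; $x\models\lozenge\varphi$ iff there is $y$ with $xRy$ and $y\models\varphi$. A formula is valid in a frame if true at every point under every valuation. For a metric space $(X,d)$, $\mathrm{Log}_{=1}(X)$ is the set of modal formulas valid in the frame $(X,R_{=1})$, where $xR_{=1}y$ iff $d(x,y)=1$. $\mathbb{R}^n$ carries the Euclidean metric. *)

(* Defs.v *)
From Stdlib Require Import Reals.
From mathcomp Require Import all_boot all_algebra.
From mathcomp Require Import Rstruct.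

Set Implicit Arguments.
Unset Strict Implicit.
Unset Printing Implicit Defensive.

Inductive formula : Type :=
  | Var : nat -> formula
  | Bot : formula
  | Imp : formula -> formula -> formula
  | Dia : formula -> formula.

Fixpoint sat (X : Type) (Rel : X -> X -> Prop) (V : nat -> X -> Prop)
    (x : X) (phi : formula) : Prop :=
  match phi with
  | Var p => V p x
  | Bot => False
  | Imp a b => sat Rel V x a -> sat Rel V x b
  | Dia a => exists y, Rel x y /\ sat Rel V y a
  end.

Definition valid_in_frame (X : Type) (Rel : X -> X -> Prop) (phi : formula) : Prop :=
  forall (V : nat -> X -> Prop) (x : X), sat Rel V x phi.

Definition R_eq1 (X : Type) (d : X -> X -> R) : X -> X -> Prop :=
  fun x y => d x y = 1%R.

Definition Log_eq1 (X : Type) (d : X -> X -> R) : formula -> Prop :=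
  fun phi => valid_in_frame (R_eq1 d) phi.

Definition dist_R (x y : R) : R := Rabs (x - y).

Definition dist_Rn (n : nat) (x y : 'rV[R]_n) : R :=
  sqrt (\sum_(i < n) (x ord0 i - y ord0 i) ^+ 2)%R.

(* Main.v *)
Require Import Defs.
From Stdlib Require Import Reals.
From mathcomp Require Import all_boot all_algebra.
From mathcomp Require Import Rstruct.
From Stdlib Require Import Lra.

Local Open Scope ring_scope.
Import GRing.Theory.

Definition f2 (m : nat) (a b : R) (i : 'I_m.+2) : R :=
  if (i : nat) == 0%N then a else if (i : nat) == 1%N then b else 0.

Arguments f2 {m}.

Lemma sum_f2 m a b : \sum_(i < m.+2) (f2 a b i) ^+ 2 = a ^+ 2 + b ^+ 2.
Proof.
rewrite 2!big_ord_recl big1 ?addr0 //= => i _.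
by rewrite /f2 /= expr2 mulr0.
Qed.

Lemma dist_f2 m (x y : 'rV[R]_m.+2) a b :
  (forall i, x ord0 i - y ord0 i = f2 a b i) ->
  dist_Rn x y = sqrt (a ^+ 2 + b ^+ 2).
Proof.
move=> H; rewrite /dist_Rn (eq_bigr (fun i => (f2 a b i) ^+ 2)) ?sum_f2 //.
by move=> i _; rewrite H.
Qed.

From mathcomp Require Import ring.

Definition pt m (x : 'rV[R]_m.+2) (a b : R) : 'rV[R]_m.+2 :=
  \row_i (x ord0 i + f2 a b i).

Arguments pt {m}.

Lemma dpt m (x : 'rV[R]_m.+2) a b c d :
  dist_Rn (pt x a b) (pt x c d) = sqrt ((a - c) ^+ 2 + (b - d) ^+ 2).
Proof.
apply: dist_f2 => i; rewrite !mxE /f2.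
case: ifP => _; first ring. case: ifP => _; ring.
Qed.

Lemma pt0 m (x : 'rV[R]_m.+2) : pt x 0 0 = x.
Proof.
apply/matrixP => i j; rewrite !mxE /f2 (ord1 i).
case: ifP => _; first by rewrite addr0. case: ifP => _; by rewrite addr0.
Qed.

Lemma R2E : @GRing.natmul R (GRing.one R) 2 = IZR 2.
Proof. rewrite -INRE /=; lra. Qed.

Ltac toR := rewrite ?R2E -?RpowE -?RminusE -?RplusE -?RdivE -?RmultE -?RoppE -?R0E -?R1E /=.

Lemma s3 : (sqrt 3 * sqrt 3 = 3)%R.
Proof. apply: sqrt_sqrt; lra. Qed.

Arguments pt0 {m}.
Arguments dpt {m}.

Lemma sq1 : sqrt ((0 - 1) ^+ 2 + (0 - 0) ^+ 2) = 1%R.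
Proof.
set t := (X in sqrt X). have -> : t = 1 by rewrite /t; toR; lra.
exact: sqrt_1.
Qed.

Lemma sq2 : sqrt ((1 - 1 / 2) ^+ 2 + (0 - sqrt 3 / 2) ^+ 2) = 1%R.
Proof.
set t := (X in sqrt X). have -> : t = 1.
  rewrite /t; toR. have h := s3. field_simplify. replace (pow (sqrt 3) 2) with (IZR 3); [lra | simpl; rewrite Rmult_1_r; exact: esym h].
exact: sqrt_1.
Qed.

Lemma sq3 : sqrt ((1 / 2 - 0) ^+ 2 + (sqrt 3 / 2 - 0) ^+ 2) = 1%R.
Proof.
set t := (X in sqrt X). have -> : t = 1.
  rewrite /t; toR. have h := s3. field_simplify. replace (pow (sqrt 3) 2) with (IZR 3); [lra | simpl; rewrite Rmult_1_r; exact: esym h].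
exact: sqrt_1.
Qed.

Lemma sqE (a b : R) : a ^+ 2 + b ^+ 2 = 1 -> sqrt (a ^+ 2 + b ^+ 2) = 1%R.
Proof. move=> h. have -> : Rplus (a ^+ 2) (b ^+ 2) = 1 by exact: h. exact: sqrt_1. Qed.

Lemma nbR x y : R_eq1 dist_R x y -> (y = Rminus x (IZR 1) \/ y = Rplus x (IZR 1)).
Proof.
rewrite /R_eq1 /dist_R -?R1E; unfold Rabs; destruct (Rcase_abs (Rminus x y)); intros; lra.
Qed.

Arguments nbR {x y}.

Lemma pt00 m (a b : R) : (pt (0 : 'rV[R]_m.+2) a b) ord0 ord0 = a.
Proof. by rewrite !mxE /f2 /= add0r. Qed.

Arguments pt00 {m}.

Lemma n1m1 : (1 : R) = -1 -> False.
Proof. toR. lra. Qed.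
Lemma n10 : (1 : R) = 0 -> False.
Proof. toR. lra. Qed.
Lemma nm10 : (-1 : R) = 0 -> False.
Proof. toR. lra. Qed.

Definition Neg a := Imp a Bot.
Definition And a b := Neg (Imp a (Neg b)).
Definition phi1 := Imp (Var 0) (Dia (Dia (Dia (Var 0)))).
Definition phi2 := Imp (Dia (Var 0)) (Imp (Dia (Var 1)) (Imp (Dia (Var 2))
  (Imp (Neg (Dia (And (Var 0) (Var 1)))) (Imp (Neg (Dia (And (Var 0) (Var 2))))
     (Dia (And (Var 1) (Var 2))))))).

Lemma phi2_R : Log_eq1 dist_R phi2.
Proof.
move=> V x /= [y0 [r0 h0]] [y1 [r1 h1]] [y2 [r2 h2]] n01 n02.
case: (nbR r0) => e0; case: (nbR r1) => e1; case: (nbR r2) => e2;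
first [ (have E : y0 = y1 by lra); exfalso; apply n01; exists y0; split => //;
          move=> k; apply: (k h0); rewrite E //
      | (have E : y0 = y2 by lra); exfalso; apply n02; exists y0; split => //;
          move=> k; apply: (k h0); rewrite E //
      | (have E : y1 = y2 by lra); exists y1; split => //;
          move=> k; apply: (k h1); rewrite E // ].
Qed.

Lemma phi2_Rn m : ~ Log_eq1 (@dist_Rn m.+2) phi2.
Proof.
move=> Hv.
pose x0 : 'rV[R]_m.+2 := 0.
pose V := fun (k : nat) (w : 'rV[R]_m.+2) =>
  if k == 0%N then w ord0 ord0 = 1 else if k == 1%N then w ord0 ord0 = -1
  else w ord0 ord0 = 0.
have dd : forall a b, a ^+ 2 + b ^+ 2 = 1 -> R_eq1 (@dist_Rn m.+2) x0 (pt x0 a b).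
  move=> a b h; rewrite /R_eq1 -{1}(pt0 x0) dpt; apply: sqE. by rewrite !sub0r !sqrrN.
have e1 : (1:R) ^+ 2 + 0 ^+ 2 = 1 by rewrite expr1n expr2 mulr0 addr0.
have e2 : (-1:R) ^+ 2 + 0 ^+ 2 = 1 by rewrite sqrrN expr1n expr2 mulr0 addr0.
have e3 : (0:R) ^+ 2 + 1 ^+ 2 = 1 by rewrite expr1n expr2 mulr0 add0r.
have v1 : V 0%N (pt x0 1 0) by rewrite /V /= pt00.
have v2 : V 1%N (pt x0 (-1) 0) by rewrite /V /= pt00.
have v3 : V 2%N (pt x0 0 1) by rewrite /V /= pt00.
have H := Hv V x0; simpl in H.
have H' := H (ex_intro _ _ (conj (dd _ _ e1) v1)) (ex_intro _ _ (conj (dd _ _ e2) v2))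
  (ex_intro _ _ (conj (dd _ _ e3) v3)).
have [y [_ k]] := H' (fun '(ex_intro y (conj _ k)) => k (fun a b => n1m1 (etrans (esym a) b)))
   (fun '(ex_intro y (conj _ k)) => k (fun a b => n10 (etrans (esym a) b))).
apply: k => a b; exact: nm10 (etrans (esym a) b).
Qed.

Lemma phi1_Rn m : Log_eq1 (@dist_Rn m.+2) phi1.
Proof.
move=> V x /= hx.
exists (pt x 1 0); split.
  rewrite /R_eq1 -{1}(pt0 x) dpt; apply: sqE.
  by rewrite subrr sub0r sqrrN expr1n expr2 mulr0 addr0.
exists (pt x (1/2) (sqrt 3 / 2)); split.
  by rewrite /R_eq1 dpt sq2.
exists x; split => //.
by rewrite /R_eq1 -{2}(pt0 x) dpt sq3.
Qed.

Lemma phi1_R : ~ Log_eq1 dist_R phi1.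
Proof.
move=> Hv.
have := Hv (fun _ y => y = IZR 0) (IZR 0) => /=.
move=> /(_ erefl) [y1 [r1 [y2 [r2 [y3 [r3 h]]]]]].
case: (nbR r1) => e1; case: (nbR r2) => e2; case: (nbR r3) => e3; lra.
Qed.

Theorem proposition3p10 (n : nat) (hn : (1 < n)%N) :
  ~ (forall phi : formula, Log_eq1 dist_R phi -> Log_eq1 (@dist_Rn n) phi) /\
  ~ (forall phi : formula, Log_eq1 (@dist_Rn n) phi -> Log_eq1 dist_R phi).
Proof.
case: n hn => [|[|m]] // _; split.
  move=> H; exact: (@phi2_Rn m (H _ phi2_R)).
by move=> H; apply: phi1_R; apply: H; apply: phi1_Rn.
Qed.
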